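(* Let $p\ge3$ be a prime, let $k\ge1$ and let $c>0$. If $D$ is a probability distribution on $\mathbb{F}_p^k$ such that $D(W)\le1-c$ for every proper affine subspace $W$ of $\mathbb{F}_p^k$, then for every positive integer $M\ge 2kp^2\log p/(c\pi^2)$ the distribution $MD$ satisfies $|MD(x)-p^{-k}|\le p^{-2k}$ for each $x\in\mathbb{F}_p^k$.
   Context: $D(W)=\sum_{x\in W}D(x)$. $MD$ denotes the $M$-fold convolution of $D$ with itself, i.e. the distribution of the sum of $M$ independent random variables with distribution $D$. *)

(* Defs.v *)
From HB Require Import structures.
From mathcomp Require Import all_boot all_order all_algebra.
From mathcomp Require Import all_classical all_reals all_analysis.
Set Implicit Arguments. Unset Strict Implicit. Unset Printing Implicit Defensive.
Import Order.TTheory GRing.Theory Num.Theory.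
Local Open Scope ring_scope.

Definition is_distr (R : realType) (T : finType) (D : T -> R) : Prop :=
  (forall x, 0 <= D x) /\ \sum_(x : T) D x = 1.

Definition mass (R : realType) (T : finType) (D : T -> R) (W : {set T}) : R :=
  \sum_(x in W) D x.

Definition affine_set (p k : nat) (a : 'rV['F_p]_k) (V : {vspace 'rV['F_p]_k})
  : {set 'rV['F_p]_k} := [set x | x - a \in V].

Definition proper_affine_subspace (p k : nat) (W : {set 'rV['F_p]_k}) : Prop :=
  exists (a : 'rV['F_p]_k) (V : {vspace 'rV['F_p]_k}),
    V != fullv /\ W = affine_set a V.

(* M-fold convolution of D: the distribution of the sum of M independent
   random variables with distribution D. *)
Definition convpow (R : realType) (p k : nat) (M : nat) (D : 'rV['F_p]_k -> R)
  (x : 'rV['F_p]_k) : R :=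
  \sum_(f : {ffun 'I_M -> 'rV['F_p]_k} | \sum_(i < M) f i == x) \prod_(i < M) D (f i).

(* Main.v *)
Require Import Defs.
From HB Require Import structures.
From mathcomp Require Import all_boot all_order all_algebra.
From mathcomp Require Import all_classical all_reals all_analysis.
From mathcomp Require Import complex.
From mathcomp Require Import ring lra zify.
Import Order.TTheory GRing.Theory Num.Theory.
Local Open Scope ring_scope.

Module Dev.
Import Order.TTheory GRing.Theory Num.Theory.
Import numFieldNormedType.Exports.
Local Open Scope ring_scope.
Local Open Scope complex_scope.

Section A.
Variable R : realType.

Lemma sin_lb (x : R) : 0 < x < 2 -> x - x^+3 / 6%:R <= sin x.
Proof.
move=> /andP[x0 x2].
have sinx := @cvg_sin_coeff' R x.
rewrite -(cvg_lim (@Rhausdorff R) sinx).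
have -> : x - x^+3 / 6%:R = \sum_(0 <= i < 2) sin_coeff' x i.
  rewrite big_nat_recr // big_nat_recr // big_nil /sin_coeff' /=.
  change (0.*2.+1)%N with 1%N; change (1.*2.+1)%N with 3%N.
  rewrite add0r expr0z expr1z mul1r mulN1r expr1 (_ : 1`! = 1)%N // divr1.
  by rewrite (_ : 3`! = 6)%N // mulNr.
apply: ltW; apply: lt_sum_lim_series; first by move/cvgP in sinx.
move=> d.
rewrite /sin_coeff'.
set N := (2 + d.*2).*2.+1.
have -> : (2 + d.*2.+1).*2.+1 = N.+2 by rewrite /N addnS doubleS.
rewrite -!exprnP -(signr_odd _ (2 + d.*2.+1)) -(signr_odd _ (2 + d.*2)).
rewrite !oddD !odd_double /=.
have -> : (-1) ^+ (~~ odd d.*2) = -1 :> R.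
  by rewrite odd_double.
rewrite expr0.
rewrite mul1r mulN1r mulNr subr_gt0.
have fp : 0 < N`!%:R :> R by rewrite ltr0n fact_gt0.
have aP : 0 < x ^+ N by rewrite exprn_gt0.
have N5 : (5 <= N)%N by rewrite /N -!muln2; lia.
clearbody N.
rewrite !factS !natrM !exprS.
have -> : x * (x * x ^+ N) / ((N.+2)%:R * ((N.+1)%:R * N`!%:R)) =
   (x ^+ N / N`!%:R) * (x * x / ((N.+2)%:R * (N.+1)%:R)).
  field; apply/and3P; split; apply: lt0r_neq0 => //;
  have := ler0n R N; lra.
have ap : 0 < x ^+ N / N`!%:R by apply: divr_gt0.
rewrite -[ltRHS]mulr1 ltr_pM2l //.
rewrite ltr_pdivrMr; last by rewrite mulr_gt0.
rewrite mul1r.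
have : 5 <= N%:R :> R by rewrite ler_nat.
rewrite -!natr1 -!addrA.
nra.
Qed.
Lemma polyJ (w : R) : 0 <= w <= 256/225 -> 0 <= 1/12 - 5 * w / 72 + w ^+ 2 / 128.
Proof. move=> /andP[w0 w1]. nra. Qed.

Lemma poly1 (c w : R) : 1/2 <= c <= 1 -> 0 <= w <= 256/225 ->
  0 <= -2 + 3 * (c * w / 2) - 2 * (c * w / 2)^+2 + (c * w / 2)^+3 / 2 + 2 * (1 - w/6)^+2.
Proof.
move=> /andP[c0 c1] /andP[w0 w1].
have J := @polyJ w (introT andP (conj w0 w1)).
set x := c * w / 2.
have x0 : w / 4 <= x by rewrite /x; nra.
have x1 : x <= w / 2 by rewrite /x; nra.
have : (x - w/4) * (3 - 2 * (x + w/4) + (x^+2 + x * (w/4) + (w/4)^+2)/2) >= 0.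
  apply: mulr_ge0; first lra.
  nra.
nra.
Qed.

Lemma poly2 (c w : R) : 0 <= c <= 1/2 -> 0 <= w <= 256/225 ->
  0 <= -2 + 3 * (c * w / 2) - 2 * (c * w / 2)^+2 + (c * w / 2)^+3 / 2 + 4 * (1 - c) * (1 - w/6)^+2.
Proof.
move=> /andP[c0 c1] /andP[w0 w1].
have J := @polyJ w (introT andP (conj w0 w1)).
set x := c * w / 2.
have x0 : 0 <= x by rewrite /x; nra.
have x1 : x <= w / 4 by rewrite /x; nra.
have Q3 : 3 - 2 * (x + w/4) + (x^+2 + x * (w/4) + (w/4)^+2)/2 <= 3 by nra.
have Q0 : 0 <= 3 - 2 * (x + w/4) + (x^+2 + x * (w/4) + (w/4)^+2)/2 by nra.
have T : 2 <= 4 * (1 - w/6)^+2 by nra.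
have E : x - w/4 = - (w/2) * (1/2 - c) by rewrite /x; field.
set Q := 3 - 2 * (x + w/4) + (x^+2 + x * (w/4) + (w/4)^+2)/2 in Q3 Q0.
have H : -2 + 3 * x - 2 * x^+2 + x^+3 / 2 - (-2 + 3 * (w/4) - 2 * (w/4)^+2 + (w/4)^+3 / 2)
   = (x - w/4) * Q by rewrite /Q; ring.
rewrite E in H.
have : 0 <= (1/2 - c) * (4 * (1 - w / 6) ^+ 2 - w/2 * Q).
  apply: mulr_ge0; nra.
nra.
Qed.

Lemma pi_lt : pi < 16/5 :> R.
Proof.
have s1 := @sin_lb (4/5).
have h1 : (0:R) < 4/5 by lra.
have h2 : (4/5:R) < 2 by lra.
have {}s1 := s1 (introT andP (conj h1 h2)).
have sp : 0 <= 4/5 - (4/5)^+3/6%:R :> R by lra.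
have c1 : cos (8/5) < 0 :> R.
  have -> : 8/5 = (4/5) *+ 2 :> R by rewrite mulr2n; lra.
  rewrite cos_mulr2n cos2sin2.
  have : (4/5 - (4/5)^+3/6%:R)^+2 <= sin (4/5) ^+ 2 :> R.
    by apply: lerXn2r => //; rewrite nnegrE //; apply: le_trans s1.
  lra.
rewrite ltNge; apply/negP => hp.
have := pi_gt0 R => p0.
have : 8/5 <= pi / 2 :> R by lra.
rewrite le_eqVlt => /orP[/eqP e|lt].
  by move: c1; rewrite e cos_pihalf ltxx.
have : 0 < cos (8/5) :> R.
  apply: cos_gt0_pihalf.
  have h3 : - (pi/2) < 8/5 :> R by lra.
  exact: (introT andP (conj h3 lt)).
lra.
Qed.

Lemma exp_lb (x : R) : 0 <= x <= 4 -> (1 - x/4)^+4 <= expR (- x).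
Proof.
move=> /andP[x0 x4].
have -> : - x = (- (x / 4)) * 4%:R by field.
rewrite expRM_natr.
apply: lerXn2r; rewrite ?nnegrE; [lra| exact: expR_ge0 |].
by have := expR_ge1Dx (- (x / 4)); lra.
Qed.

Lemma key_ineq (c g y s : R) : 0 < c <= 1 -> 0 < y <= 16/15 -> c <= g ->
  (c <= 1/2 -> 2 * c * (1 - c) <= g) -> (y - y^+3/6%:R)^+2 <= s ->
  1 - 2 * g * s <= expR (- (2 * c * y^+2)).
Proof.
move=> /andP[c0 c1] /andP[y0 y1] cg cg2 Ss.
set w := y ^+ 2.
have w0 : 0 <= w by rewrite /w; nra.
have w1 : w <= 256/225 by rewrite /w; nra.
have SE : (y - y^+3/6%:R)^+2 = w * (1 - w/6)^+2 by rewrite /w; field.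
rewrite SE in Ss.
have e1 : 0 <= 2 * c * w by nra.
have e2 : 2 * c * w <= 4 by nra.
apply: (le_trans _ (@exp_lb _ (introT andP (conj e1 e2)))).
have -> : (1 - 2 * c * w / 4)^+4 = 1 + c * w * (-2 + 3 * (c * w / 2) - 2 * (c * w / 2)^+2 + (c * w / 2)^+3 / 2)
  by field.
have cw : 0 <= c * w by nra.
have g0 : 0 <= g by lra.
have : 2 * g * (w * (1 - w / 6) ^+ 2) <= 2 * g * s by nra.
case: (lerP c (1/2)) => ch.
  have P := @poly2 c w (introT andP (conj (ltW c0) ch)) (introT andP (conj w0 w1)).
  have := cg2 ch => g2.
  have : 4 * c * (1 - c) * (w * (1 - w / 6) ^+ 2) <= 2 * g * (w * (1 - w / 6) ^+ 2).
    have : 0 <= w * (1 - w / 6) ^+ 2 by nra.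
    nra.
  nra.
have P := @poly1 c w (introT andP (conj (ltW ch) c1)) (introT andP (conj w0 w1)).
have : 2 * c * (w * (1 - w / 6) ^+ 2) <= 2 * g * (w * (1 - w / 6) ^+ 2).
  have : 0 <= w * (1 - w / 6) ^+ 2 by nra.
  nra.
nra.
Qed.

End A.


Section B.
Variable R : realFieldType.

Lemma P_bounds (T : finType) (K : eqType) (h : T -> K) (D : T -> R) (c : R) (y1 : T) :
  (forall x, 0 <= D x) -> \sum_x D x = 1 ->
  (forall y, \sum_(z | h y == h z) D z <= 1 - c) ->
  let P := \sum_y D y * \sum_(z | h y == h z) D z in
  [/\ c <= 1, P <= 1 - c & (c <= 1/2 -> P <= 1 - 2 * c * (1 - c))].
Proof.
move=> D0 D1 hq P.
set q := fun y => \sum_(z | h y == h z) D z.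
have q0 : forall y, 0 <= q y by move=> y; apply: sumr_ge0.
have [y0 _ hmax] : exists2 y0, true & forall y, q y <= q y0.
  case: (@real_arg_maxP R T y1 xpredT q isT) => [|y0 _ H].
    by move=> y _; apply: ger0_real.
  by exists y0 => // y; apply: H.
set m := q y0.
have m0 : 0 <= m by apply: q0.
have m1 : m <= 1 - c by apply: hq.
have Pm : P <= m.
  rewrite /P -[m]mul1r -D1 mulr_suml; apply: ler_sum => y _.
  by apply: ler_wpM2l => //; apply: hmax.
have Pm2 : P <= m ^+ 2 + (1 - m) ^+ 2.
  have split1 : \sum_y D y = \sum_(y | h y0 == h y) D y + \sum_(y | h y0 != h y) D y.
    by rewrite (bigID (fun y => h y0 == h y)).
  have Hc : \sum_(y | h y0 != h y) D y = 1 - m.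
    by rewrite -D1 split1 /m /q /= addrC addKr.
  rewrite /P (bigID (fun y => h y0 == h y)) /=.
  apply: lerD.
    have -> : \sum_(y | h y0 == h y) D y * \sum_(z | h y == h z) D z
        = \sum_(y | h y0 == h y) D y * m.
      apply: eq_bigr => y /eqP e; congr (_ * _); rewrite /m /q.
      by apply: eq_bigl => z; rewrite e.
    by rewrite -mulr_suml expr2.
  rewrite expr2 -{1}Hc mulr_suml; apply: ler_sum => y hy.
  apply: ler_wpM2l => //.
  have : q y + m <= 1.
    rewrite /m /q /= -D1 (big_mkcond (fun z => h y == h z)) (big_mkcond (fun z => h y0 == h z)) -big_split /=.
    apply: ler_sum => z _.
    case: eqP => [e1|_]; case: eqP => [e2|_]; rewrite ?addr0 ?add0r //.
    by move: hy; rewrite e1 e2 eqxx.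
  rewrite /q; lra.
split.
- by have := q0 y0; rewrite -/m; lra.
- lra.
- move=> c2. case: (lerP c m) => cm.
    have : m ^+ 2 + (1 - m) ^+ 2 <= c ^+ 2 + (1 - c) ^+ 2 by nra.
    nra.
  nra.
Qed.
End B.


Section F.
Variable R : realType.
Variable p : nat.
Hypothesis hp : prime p.
Hypothesis hp3 : (3 <= p)%N.

Let p0 : 0 < p%:R :> R.
Proof. by rewrite ltr0n; lia. Qed.

Lemma mulcE (a b c d : R) :
  (Complex a b) * (Complex c d) = Complex (a * c - b * d) (a * d + b * c) :> R[i].
Proof. by []. Qed.

Lemma addcE (a b c d : R) :
  (Complex a b) + (Complex c d) = Complex (a + c) (b + d) :> R[i].
Proof. by []. Qed.

Definition theta : R := pi *+ 2 / p%:R.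
Definition omega : R[i] := Complex (cos theta) (sin theta).

Lemma omegaX n : omega ^+ n = Complex (cos (n%:R * theta)) (sin (n%:R * theta)).
Proof.
elim: n => [|n IH]; first by rewrite expr0 mul0r cos0 sin0.
rewrite exprSr IH /omega mulcE -natr1 mulrDl mul1r cosD sinD.
congr Complex; ring.
Qed.

Lemma omegap : omega ^+ p = 1.
Proof.
rewrite omegaX /theta mulrC divfK; last by rewrite gt_eqF.
by rewrite cos2pi sin2pi.
Qed.

Lemma theta_gt0 : 0 < theta.
Proof. by rewrite /theta divr_gt0 // mulrn_wgt0 // pi_gt0. Qed.

Lemma theta_lt_pi : theta < pi.
Proof.
rewrite /theta ltr_pdivrMr // mulr2n.
have : 3 <= p%:R :> R by rewrite (ler_nat R 3 p).
have := pi_gt0 R; nra.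
Qed.

Lemma omega_neq1 : omega != 1.
Proof.
apply/eqP => /(congr1 (@complex.Im R)) /=.
have : 0 < sin theta by apply: sin_gt0_pi; rewrite theta_gt0 theta_lt_pi.
move=> h e; move: h; rewrite e ltxx //.
Qed.

Definition chi (t : 'F_p) : R[i] := omega ^+ (nat_of_ord t).

Lemma valFD (a b : 'F_p) : nat_of_ord (a + b) = ((a + b) %% p)%N.
Proof. by rewrite /=; congr (_ %% _)%N; apply: Fp_cast. Qed.

Lemma chiD a b : chi (a + b) = chi a * chi b.
Proof. by rewrite /chi valFD (expr_mod _ omegap) exprD. Qed.

Lemma chi0 : chi 0 = 1.
Proof. by rewrite /chi expr0. Qed.

Lemma chi1 : chi 1 = omega.
Proof. by rewrite /chi /= modn_small ?expr1. Qed.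

Lemma norm_omega : `|omega| = 1.
Proof. by rewrite normc_def /= cos2Dsin2 sqrtr1. Qed.

Lemma norm_chi t : `|chi t| = 1.
Proof. by rewrite /chi normrX norm_omega expr1n. Qed.

Lemma cos_small n : (0 < n)%N -> (n * 2 <= p)%N -> cos (n%:R * theta) <= cos theta.
Proof.
move=> n0 np.
have t0 := theta_gt0.
have pi0 := pi_gt0 R.
have hn : n%:R * theta <= pi.
  have : (n * 2)%:R <= p%:R :> R by rewrite ler_nat.
  rewrite natrM /theta mulrA ler_pdivrMr // -mulr_natr; nra.
case: (ltngtP n 1) => [|n1|->]; [lia| |by rewrite mul1r].
have : theta < n%:R * theta.
  have : 1 < n%:R :> R by rewrite ltr1n.
  nra.
rewrite -ltr_cos ?in_itv /= ?(ltW t0) ?(ltW theta_lt_pi) ?hn //; first by move/ltW.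
by rewrite mulr_ge0 // ltW.
Qed.

Lemma ptheta : p%:R * theta = pi *+ 2.
Proof. by rewrite /theta mulrC divfK // gt_eqF. Qed.

Lemma cos_n n : (0 < n)%N -> (n < p)%N -> cos (n%:R * theta) <= cos theta.
Proof.
move=> n0 np.
case: (leqP (n * 2) p) => h; first exact: cos_small.
have -> : cos (n%:R * theta) = cos ((p - n)%:R * theta).
  rewrite natrB ?(ltnW np) // mulrBl ptheta addrC cosD2pi cosN //.
apply: cos_small; lia.
Qed.

Lemma valF_lt (a : 'F_p) : (nat_of_ord a < p)%N.
Proof. by have := ltn_ord a; move: (nat_of_ord a) => n; rewrite Fp_cast. Qed.

Lemma cos_ang (a b : 'F_p) : a != b ->
  cos ((nat_of_ord a)%:R * theta - (nat_of_ord b)%:R * theta) <= cos theta.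
Proof.
move=> ab.
have ha := valF_lt a; have hb := valF_lt b.
have : nat_of_ord a != nat_of_ord b by [].
case: (ltngtP (nat_of_ord a) (nat_of_ord b)) => // h _.
  rewrite -cosN opprB -mulrBl -natrB ?(ltnW h) //; apply: cos_n; lia.
rewrite -mulrBl -natrB ?(ltnW h) //; apply: cos_n; lia.
Qed.

Variable k : nat.
Local Notation G := 'rV['F_p]_k.

Definition dt (r z : G) : 'F_p := \sum_i r 0 i * z 0 i.

Lemma dtC r z : dt r z = dt z r.
Proof. by apply: eq_bigr => i _; rewrite mulrC. Qed.

Lemma dtDr r z1 z2 : dt r (z1 + z2) = dt r z1 + dt r z2.
Proof. by rewrite /dt -big_split; apply: eq_bigr => i _; rewrite mxE mulrDr. Qed.

Lemma dtDl r1 r2 z : dt (r1 + r2) z = dt r1 z + dt r2 z.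
Proof. by rewrite dtC dtDr !(dtC z). Qed.

Lemma dt0r r : dt r 0 = 0.
Proof. by apply: big1 => i _; rewrite mxE mulr0. Qed.

Lemma dt0l z : dt 0 z = 0.
Proof. by rewrite dtC dt0r. Qed.

Lemma dtNr r z : dt r (- z) = - dt r z.
Proof. by rewrite /dt -sumrN; apply: eq_bigr => i _; rewrite mxE mulrN. Qed.

Lemma dtBr r z1 z2 : dt r (z1 - z2) = dt r z1 - dt r z2.
Proof. by rewrite dtDr dtNr. Qed.

Lemma dt_sum r M (f : 'I_M -> G) : dt r (\sum_i f i) = \sum_i dt r (f i).
Proof. exact: (big_morph (dt r) (dtDr r) (dt0r r)). Qed.

Lemma dt_dual z : z != 0 -> exists s, dt s z = 1.
Proof.
move=> z0.
have [j zj] : exists j, z 0 j != 0.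
  apply/existsP; apply: contraNT z0; rewrite negb_exists => /forallP h.
  by apply/eqP/rowP => j; rewrite mxE; apply/eqP; rewrite -[_ == _]negbK h.
exists ((z 0 j)^-1 *: delta_mx 0 j); rewrite /dt (bigD1 j) //= big1.
  by rewrite !mxE !eqxx mulr1 addr0 mulVf.
by move=> i ij; rewrite !mxE (negbTE ij) andbF mulr0 mul0r.
Qed.

Definition E (r z : G) : R[i] := chi (dt r z).

Lemma EDr r z1 z2 : E r (z1 + z2) = E r z1 * E r z2.
Proof. by rewrite /E dtDr chiD. Qed.

Lemma EDl r1 r2 z : E (r1 + r2) z = E r1 z * E r2 z.
Proof. by rewrite /E dtDl chiD. Qed.

Lemma E0r r : E r 0 = 1.
Proof. by rewrite /E dt0r chi0. Qed.

Lemma E0l z : E 0 z = 1.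
Proof. by rewrite /E dt0l chi0. Qed.

Lemma E_sum r M (f : 'I_M -> G) : E r (\sum_i f i) = \prod_i E r (f i).
Proof. exact: (big_morph (E r) (EDr r) (E0r r)). Qed.

Lemma cardG : #|{: G}| = (p ^ k)%N.
Proof. by rewrite card_mx card_Fp // mul1n. Qed.

Lemma sumE z : \sum_r E r z = if z == 0 then (p ^ k)%:R else 0.
Proof.
case: eqP => [->|/eqP z0].
  by under eq_bigr do rewrite E0r; rewrite sumr_const cardG.
have [s hs] := @dt_dual z z0.
set S := \sum_r E r z.
have : S = S * omega.
  rewrite {1}/S (reindex_inj (addIr s)) /= -chi1 -hs mulr_suml.
  by apply: eq_bigr => r _; rewrite EDl.
move/eqP; rewrite -subr_eq0 -{1}[S]mulr1 -mulrBr mulf_eq0 subr_eq0 eq_sym.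
by rewrite [1 == omega]eq_sym (negbTE omega_neq1) orbF eq_sym => /eqP.
Qed.


Definition hatD (D : G -> R) r : R[i] := \sum_y (D y)%:C * E r y.

Lemma conv_fourier D M x :
  ((p ^ k)%:R * convpow M D x)%:C = \sum_r hatD D r ^+ M * E r (- x).
Proof.
have hX : forall a : R[i], a ^+ M = \prod_(i < M) a.
  by move=> a; rewrite prodr_const card_ord.
under eq_bigr => r _.
  rewrite hX /hatD bigA_distr_bigA /= mulr_suml.
  under eq_bigr => f _.
    rewrite big_split /= -rmorph_prod -E_sum -mulrA -EDr.
  over.
over.
rewrite /= exchange_big /=.
under eq_bigr => f _ do rewrite -mulr_sumr sumE subr_eq0.
rewrite /convpow rmorphM rmorph_nat rmorph_sum mulr_sumr big_mkcond /=.
apply: eq_bigr => f _.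
case: eqP => _; last by rewrite mulr0.
by rewrite mulrC.
Qed.

Definition ang (r y : G) : R := (nat_of_ord (dt r y))%:R * theta.

Lemma sumC (I : finType) (a b : I -> R) :
  \sum_i Complex (a i) (b i) = Complex (\sum_i a i) (\sum_i b i) :> R[i].
Proof.
elim/big_rec3: _ => // i x y z _ ->.
by rewrite addcE.
Qed.

Lemma rcE (a : R) : a%:C = Complex a 0.
Proof. by []. Qed.

Lemma hatDE D r : hatD D r =
  Complex (\sum_y D y * cos (ang r y)) (\sum_y D y * sin (ang r y)).
Proof.
rewrite /hatD -sumC; apply: eq_bigr => y _.
by rewrite /E /chi omegaX rcE mulcE !mul0r subr0 addr0.
Qed.

Lemma AB_expand D r :
  (\sum_y D y * cos (ang r y)) ^+ 2 + (\sum_y D y * sin (ang r y)) ^+ 2 =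
  \sum_y \sum_z D y * D z * cos (ang r y - ang r z).
Proof.
rewrite !expr2 !mulr_suml -big_split /=; apply: eq_bigr => y _.
rewrite !mulr_sumr -big_split /=; apply: eq_bigr => z _.
rewrite cosB; ring.
Qed.

Lemma AB_bound D r : (forall x, 0 <= D x) -> \sum_x D x = 1 ->
  \sum_y \sum_z D y * D z * cos (ang r y - ang r z) <=
  1 - (1 - cos theta) * (1 - \sum_y D y * \sum_(z | dt r y == dt r z) D z).
Proof.
move=> D0 D1.
apply: (@le_trans _ _ (\sum_y \sum_z D y * D z * (cos theta + (1 - cos theta) * (dt r y == dt r z)%:R))).
  apply: ler_sum => y _; apply: ler_sum => z _.
  apply: ler_wpM2l; first by apply: mulr_ge0.
  case: eqP => [e|/eqP ne].
    by rewrite mulr1; have := cos_le1 (ang r y - ang r z); lra.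
  by rewrite mulr0 addr0 /ang; apply: cos_ang.
have -> : \sum_y \sum_z D y * D z * (cos theta + (1 - cos theta) * (dt r y == dt r z)%:R)
  = cos theta * (\sum_y \sum_z D y * D z) + (1 - cos theta) *
     \sum_y D y * \sum_(z | dt r y == dt r z) D z.
  rewrite mulr_sumr mulr_sumr -big_split /=; apply: eq_bigr => y _.
  rewrite (big_mkcond (fun z => dt r y == dt r z)) !mulr_sumr -big_split /=.
  apply: eq_bigr => z _; case: eqP => _; rewrite /= ?mulr1 ?mulr0; ring.
have -> : \sum_y \sum_z D y * D z = 1.
  under eq_bigr do rewrite -mulr_sumr D1 mulr1.
  exact: D1.
set P := \sum_y _.
have -> : cos theta * 1 + (1 - cos theta) * P = 1 - (1 - cos theta) * (1 - P) by ring.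
exact: le_refl.
Qed.

Lemma cos_theta : cos theta = 1 - 2 * sin (pi / p%:R) ^+ 2.
Proof.
have -> : theta = (pi / p%:R) *+ 2 by rewrite /theta mulrnAl.
by rewrite cos_mulr2n cos2sin2 mulr2n; ring.
Qed.

Lemma mx11_dt r (z : G) : (z *m r^T == 0) = (dt r z == 0).
Proof.
have -> : dt r z = (z *m r^T) 0 0.
  rewrite mxE dtC; apply: eq_bigr => i _; by rewrite mxE.
apply/eqP/eqP => [->|h]; first by rewrite mxE.
by apply/matrixP => i j; rewrite !ord1 h mxE.
Qed.

Lemma class_affine r y : r != 0 ->
  proper_affine_subspace [set z : G | dt r y == dt r z].
Proof.
move=> r0.
pose f : 'Hom(G, 'rV['F_p]_1) := linfun (mulmxr r^T).
exists y, (lker f); split.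
  apply/eqP => hV.
  have [s hs] := @dt_dual r r0.
  have : s \in lker f by rewrite hV memvf.
  rewrite memv_ker lfunE /= mx11_dt dtC hs.
  by rewrite oner_eq0.
apply/setP => z; rewrite !inE memv_ker lfunE /= mx11_dt dtBr subr_eq0 eq_sym.
by [].
Qed.

Lemma hatD_bound D c r : is_distr D ->
  (forall W : {set G}, proper_affine_subspace W -> mass D W <= 1 - c) -> 0 < c ->
  r != 0 -> `|hatD D r| <= (expR (- (c * (pi / p%:R) ^+ 2)))%:C.
Proof.
move=> [D0 D1] hW c0 r0.
have hq : forall y, \sum_(z | dt r y == dt r z) D z <= 1 - c.
  move=> y; have := hW _ (@class_affine r y r0); rewrite /mass.
  by under eq_bigl do rewrite inE.
have [c1 Pc Pc2] := @P_bounds R G _ (dt r) D c 0 D0 D1 hq.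
set P := \sum_y D y * \sum_(z | dt r y == dt r z) D z in Pc Pc2.
set y := pi / p%:R.
have pi0 := pi_gt0 R.
have pi1 := @pi_lt R.
have p3 : 3 <= p%:R :> R by rewrite (ler_nat R 3 p).
have y0 : 0 < y by rewrite /y divr_gt0.
have y1 : y <= 16/15.
  rewrite /y ler_pdivrMr //; nra.
have sl := @sin_lb R y.
have y2 : y < 2 by lra.
have {}sl := sl (introT andP (conj y0 y2)).
have sy : (y - y^+3/6%:R)^+2 <= sin y ^+ 2.
  have yy : 0 <= y - y^+3/6%:R.
    have : y * y <= 2 by nra.
    rewrite (_ : y ^+ 3 = y * (y * y)); last by rewrite -expr2 -exprS.
    nra.
  apply: lerXn2r; rewrite ?nnegrE //; exact: (le_trans yy sl).
have K := @key_ineq R c (1 - P) y (sin y ^+ 2) (introT andP (conj c0 c1))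
   (introT andP (conj y0 y1)) ltac:(lra) ltac:(move=> h; have := Pc2 h; lra) sy.
rewrite hatDE normc_def /= lecR.
set X := _ + _.
have X0 : 0 <= X by rewrite /X addr_ge0 // sqr_ge0.
have Xb : X <= 1 - 2 * (1 - P) * sin y ^+ 2.
  rewrite /X AB_expand; apply: (le_trans (@AB_bound D r D0 D1)).
  rewrite cos_theta -/y -/P; set s := sin y ^+ 2.
  suff -> : 1 - (1 - (1 - 2 * s)) * (1 - P) = 1 - 2 * (1 - P) * s by [].
  ring.
have E2 : expR (- (2 * c * y ^+ 2)) = expR (- (c * y ^+ 2)) ^+ 2.
  by rewrite -expRM_natr; congr expR; ring.
rewrite -[leRHS](@ger0_norm _ (expR (- (c * y ^+ 2)))) ?expR_ge0 //.
rewrite -sqrtr_sqr ler_sqrt ?sqr_ge0 // -E2.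
by apply: (le_trans Xb).
Qed.

End F.


Lemma normRC (R : realType) (a : R) : `|a%:C| = (`|a|)%:C.
Proof. by rewrite normc_def /= expr0n addr0 sqrtr_sqr. Qed.

Lemma alg1 (R : realType) (c P q K L : R) : c != 0 -> P != 0 -> q != 0 ->
  c * (P / q) ^+ 2 * (2 * K * q ^+ 2 * L / (c * P ^+ 2)) = L * (2 * K).
Proof. by move=> *; field; apply/and3P. Qed.

Lemma lemma4p2_aux (R : realType) (p k : nat) (c : R) (D : 'rV['F_p]_k -> R) :
  prime p -> (3 <= p)%N -> (1 <= k)%N -> 0 < c ->
  is_distr D ->
  (forall W : {set 'rV['F_p]_k}, proper_affine_subspace W -> mass D W <= 1 - c) ->
  forall M : nat, (0 < M)%N ->
    M%:R >= 2 * k%:R * (p%:R) ^+ 2 * ln (p%:R) / (c * pi ^+ 2) ->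
    forall x : 'rV['F_p]_k,
      `| convpow M D x - (p%:R) ^- k | <= (p%:R) ^- (2 * k).
Proof.
move=> hp hp3 hk c0 hD hW M M0 hM x.
have [D0 D1] := hD.
have pp : 0 < p%:R :> R by rewrite ltr0n; lia.
set e := expR (- (c * (pi / p%:R) ^+ 2)).
have e0 : 0 <= e by apply: expR_ge0.
have hb : forall r, r != 0 -> `|hatD R p k D r| <= e%:C.
  by move=> r r0; apply: (@hatD_bound R p hp hp3 k D c r hD hW c0 r0).
have id := @conv_fourier R p hp hp3 k D M x.
rewrite (bigD1 0) //= in id.
have T0 : hatD R p k D 0 ^+ M * E R p k 0 (- x) = 1.
  rewrite E0l mulr1 /hatD.
  under eq_bigr do rewrite E0l mulr1.
  by rewrite -rmorph_sum D1 expr1n.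
rewrite T0 in id.
have id2 : ((p ^ k)%:R * convpow M D x - 1)%:C =
    \sum_(r | r != 0) hatD R p k D r ^+ M * E R p k r (- x).
  by rewrite rmorphB /= id rmorph1 [1 + _]addrC addrK.
have nb : `|(p ^ k)%:R * convpow M D x - 1| <= (p ^ k)%:R * e ^+ M.
  have := congr1 (@Num.norm _ _) id2; rewrite normRC => h.
  rewrite -lecR h.
  apply: (le_trans (ler_norm_sum _ _ _)).
  apply: (@le_trans _ _ (\sum_(r | r != 0) (e ^+ M)%:C)).
    apply: ler_sum => r r0.
    rewrite normrM /E norm_chi mulr1 normrX rmorphXn.
    apply: lerXn2r; [by rewrite nnegrE | by rewrite nnegrE ler0c | exact: hb].
  rewrite -rmorph_sum lecR.
  have := @cardG p hp k.
  have : \sum_(r : 'rV['F_p]_k) e ^+ M = e ^+ M + \sum_(r : 'rV['F_p]_k | r != 0) e ^+ M :> R.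
    by rewrite (bigD1 0).
  rewrite sumr_const => h1 h2.
  rewrite h2 -mulr_natl in h1.
  have : 0 <= e ^+ M by apply: exprn_ge0.
  lra.
have pi0 := pi_gt0 R.
have eM : e ^+ M <= p%:R ^- (2 * k).
  rewrite /e -expRM_natr.
  have -> : p%:R ^- (2 * k) = expR (- ln (p%:R ^+ (2 * k))) :> R.
    by rewrite expRN lnK // posrE exprn_gt0.
  rewrite ler_expR lnXn // mulNr lerN2.
  have q0 : 0 <= c * (pi / p%:R) ^+ 2.
    by apply: mulr_ge0; [apply: ltW | apply: sqr_ge0].
  have := ler_wpM2l q0 hM.
  have -> : c * (pi / p%:R) ^+ 2 * (2 * k%:R * p%:R ^+ 2 * ln p%:R / (c * pi ^+ 2))
     = ln p%:R *+ (2 * k).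
    rewrite -[ln _ *+ _]mulr_natr natrM.
    by apply: alg1; apply: lt0r_neq0.
  by [].
have -> : convpow M D x - p%:R ^- k = p%:R ^- k * ((p ^ k)%:R * convpow M D x - 1).
  rewrite natrX mulrBr mulrA mulVf ?mul1r ?mulr1 //.
  by rewrite expf_neq0 // lt0r_neq0.
rewrite normrM ger0_norm; last by rewrite invr_ge0 exprn_ge0 // ltW.
apply: (le_trans (ler_wpM2l _ nb)); first by rewrite invr_ge0 exprn_ge0 // ltW.
rewrite natrX mulrA mulVf ?mul1r //.
by rewrite expf_neq0 // lt0r_neq0.
Qed.

End Dev.

Theorem lemma4p2 (R : realType) (p k : nat) (c : R) (D : 'rV['F_p]_k -> R) :
  prime p -> (3 <= p)%N -> (1 <= k)%N -> 0 < c ->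
  is_distr D ->
  (forall W : {set 'rV['F_p]_k}, proper_affine_subspace W -> mass D W <= 1 - c) ->
  forall M : nat, (0 < M)%N ->
    M%:R >= 2 * k%:R * (p%:R) ^+ 2 * ln (p%:R) / (c * pi ^+ 2) ->
    forall x : 'rV['F_p]_k,
      `| convpow M D x - (p%:R) ^- k | <= (p%:R) ^- (2 * k).
Proof. exact: Dev.lemma4p2_aux. Qed.
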